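(* For every task $h:\{-1,1\}^m\to\{-1,1\}$ (only its values on $\mathcal{X}$ mattering) we have $\deg(\mathcal{H}_{\min}(h))\le d$; that is, there exists $f:\{-1,1\}^m\to\mathbb{R}$ with $f=h$ on $\mathcal{X}$ and $\deg(f)\le d$.
   Context: Setup: integers $m\ge d\ge1$, $\mathcal{Z}=\{-1,1\}^d$, $\psi:\mathcal{Z}\to\{-1,1\}^m$ injective, $\mathcal{X}:=\psi(\mathcal{Z})$ (so $|\mathcal{X}|=2^d$). For $f:\{-1,1\}^n\to\mathbb{R}$, $f=\sum_{S\subseteq[n]}\hat f(S)\chi_S$ with $\chi_S(x)=\prod_{i\in S}x_i$ and $\deg(f)=\max\{|S|:\hat f(S)\ne0\}$. $\mathcal{H}(h)$ is the set of $f:\{-1,1\}^m\to\mathbb{R}$ agreeing with $h$ on $\mathcal{X}$, and $\deg(\mathcal{H}_{\min}(h))$ is the minimum degree of an element of $\mathcal{H}(h)$. *)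

(* Defs.v *)
From mathcomp Require Import all_boot all_order all_algebra.
Set Implicit Arguments. Unset Strict Implicit. Unset Printing Implicit Defensive.
Import Order.TTheory GRing.Theory Num.Theory.
Local Open Scope ring_scope.

(* The Boolean hypercube {-1,1}^n, encoded as bit vectors:
   coordinate value [b : bool] stands for [pm b] (true |-> -1, false |-> 1). *)
Definition cube (n : nat) : finType := {ffun 'I_n -> bool}.

Definition pm {R : pzRingType} (b : bool) : R := if b then -1 else 1.

Definition chi {R : pzRingType} {n : nat} (S : {set 'I_n}) (x : cube n) : R :=
  \prod_(i in S) pm (x i).

Definition fourier {R : fieldType} {n : nat} (f : cube n -> R) (S : {set 'I_n}) : R :=
  (2%:R ^+ n)^-1 * \sum_(x : cube n) f x * chi S x.

Definition fdeg {R : fieldType} {n : nat} (f : cube n -> R) : nat :=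
  \max_(S : {set 'I_n} | fourier f S != 0) #|S|.

(* Main.v *)
Require Import Defs.
From mathcomp Require Import all_boot all_order all_algebra.
From mathcomp Require Import ring lra.
Import Order.TTheory GRing.Theory Num.Theory.
Local Open Scope ring_scope.

Section Aux.
Variable R : realFieldType.
Variable m : nat.

Definition ev (c : {set 'I_m} -> R) (x : cube m) : R := \sum_S c S * chi S x.
Definition NC (X : {set cube m}) : {set 'I_m} :=
  [set i | [exists x in X, [exists y in X, x i != y i]]].
Definition setb (i : 'I_m) (b : bool) (x : cube m) : cube m :=
  [ffun j => if j == i then b else x j].
Definition fl (i : 'I_m) (x : cube m) : cube m :=
  [ffun j => if j == i then ~~ x j else x j].

Lemma two_neq0 : (2 : R) != 0.
Proof. by rewrite pnatr_eq0. Qed.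

Lemma chi_setb (i : 'I_m) (b : bool) (T : {set 'I_m}) (x : cube m) : i \notin T -> chi T (setb i b x) = chi T x :> R.
Proof.
move=> iT; apply: eq_bigr => j jT; rewrite ffunE; case: eqP => // E.
by rewrite -E jT in iT.
Qed.

Lemma ev_setb (c : {set 'I_m} -> R) (i : 'I_m) (b : bool) (x : cube m) :
  (forall T, c T != 0 -> i \notin T) -> ev c (setb i b x) = ev c x.
Proof.
move=> H; apply: eq_bigr => T _; case: (eqVneq (c T) 0) => [->|/H iT].
  by rewrite !mul0r.
by rewrite chi_setb.
Qed.

Lemma chi_U1 (i : 'I_m) (T : {set 'I_m}) (x : cube m) : i \notin T -> chi (i |: T) x = pm (x i) * chi T x :> R.
Proof. by move=> iT; rewrite /chi big_setU1. Qed.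

Lemma sum_noi (c : {set 'I_m} -> R) (i : 'I_m) (x : cube m) :
  (forall T, c T != 0 -> i \notin T) ->
  \sum_(S : {set 'I_m} | i \notin S) c S * chi S x = ev c x.
Proof.
move=> H; rewrite /ev; symmetry; rewrite (bigID (fun S : {set 'I_m} => i \in S)) /= big1 ?add0r //.
move=> S iS; case: (eqVneq (c S) 0) => [->|/H]; first by rewrite mul0r.
by rewrite iS.
Qed.

Lemma NC_sub (X Y : {set cube m}) : X \subset Y -> NC X \subset NC Y.
Proof.
move=> /subsetP XY; apply/subsetP => j; rewrite !inE.
case/exists_inP => x xX /exists_inP [y yX ne].
by apply/exists_inP; exists x; [exact: XY|apply/exists_inP; exists y => //; exact: XY].
Qed.

Lemma NC_proj (X : {set cube m}) (i : 'I_m) : NC (setb i false @: X) \subset NC X :\ i.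
Proof.
apply/subsetP => j; rewrite !inE.
case/exists_inP => x' /imsetP [x xX ->] /exists_inP [y' /imsetP [y yX ->]].
rewrite !ffunE; case: (eqVneq j i) => [->|ji]; first by rewrite eqxx.
move=> ne; apply/exists_inP; exists x => //.
by apply/exists_inP; exists y.
Qed.

Lemma base (X : {set cube m}) (F : cube m -> R) : NC X = set0 ->
  exists c : {set 'I_m} -> R,
   (forall S, c S != 0 -> (2 ^ #|S| <= #|X|)%N /\ S \subset NC X) /\
   {in X, forall x, ev c x = F x}.
Proof.
move=> NC0; case: (set_0Vmem X) => [->|[x0 x0X]].
  by exists (fun _ => 0); split => [S|x]; rewrite ?eqxx // inE.
exists (fun S => if S == set0 then F x0 else 0); split.
  move=> S; case: (eqVneq S set0) => [-> _|ne]; last by rewrite eqxx.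
  by rewrite cards0 expn0 card_gt0; split; [apply/set0Pn; exists x0|rewrite sub0set].
move=> x xX; have -> : x = x0.
  apply/ffunP => j; apply/eqP/negPn/negP => ne.
  have : j \in NC X by rewrite inE; apply/exists_inP; exists x => //; apply/exists_inP; exists x0.
  by rewrite NC0 inE.
rewrite /ev (bigD1 set0) //= eqxx big1 ?addr0.
  by rewrite /chi big_set0 mulr1.
by move=> S /negbTE ->; rewrite mul0r.
Qed.

Lemma in_U (i : 'I_m) (X : {set cube m}) (y : cube m) : y \in setb i false @: X -> y i = false.
Proof. by case/imsetP => x _ ->; rewrite ffunE eqxx. Qed.

Lemma key n : forall (X : {set cube m}) (F : cube m -> R), (#|NC X| <= n)%N ->
  exists c : {set 'I_m} -> R,
   (forall S, c S != 0 -> (2 ^ #|S| <= #|X|)%N /\ S \subset NC X) /\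
   {in X, forall x, ev c x = F x}.
Proof.
elim: n => [|n IH] X F hn.
  by apply: base; apply/eqP; rewrite -cards_eq0 -leqn0.
case: (set_0Vmem (NC X)) => [/base //|[i iNC]].
set p := setb i false; set q := setb i true.
set U := p @: X.
set I := [set y in U | (y \in X) && (q y \in X)].
have NCU : NC U \subset NC X :\ i by exact: NC_proj.
have ltU : (#|NC U| <= n)%N.
  have h1 := subset_leq_card NCU; have := cardsD1 i (NC X); rewrite iNC add1n => E.
  by rewrite -ltnS; apply: leq_ltn_trans h1 _; rewrite -E.
have IU : I \subset U by apply/subsetP => y; rewrite inE => /andP[].
have NCI : NC I \subset NC U by exact: NC_sub.
have ltI : (#|NC I| <= n)%N by apply: leq_trans (subset_leq_card NCI) ltU.
have noiU (T : {set 'I_m}) : T \subset NC U -> i \notin T.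
  move=> /subsetP TU; apply/negP => /TU /(subsetP NCU); by rewrite !inE eqxx.
have card2I : (2 * #|I| <= #|X|)%N.
  have qinj : {in I &, injective q}.
    move=> y y' /(subsetP IU) /in_U yi /(subsetP IU) /in_U y'i E.
    apply/ffunP => j; have := congr1 (fun f : cube m => f j) E; rewrite /= !ffunE.
    by case: eqP => [->|]; rewrite ?yi ?y'i.
  have disj : I :&: q @: I = set0.
    apply/setP => y; rewrite in_setI in_set0; apply/negP => /andP[/(subsetP IU) /in_U yi].
    by case/imsetP => z _ E; move: yi; rewrite E ffunE eqxx.
  rewrite mul2n -addnn -{2}(card_in_imset qinj) -cardsUI disj cards0 addn0.
  apply: subset_leq_card; apply/subsetP => y; rewrite inE.
  case/orP => [|/imsetP [z]]; rewrite inE => /andP[_ /andP[//]].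
  by move=> _ qz ->.
have [h [hs hI]] := IH I (fun y => (F y - F (q y)) / 2) ltI.
have hnoi T : h T != 0 -> i \notin T.
  by move=> /hs [_ /subset_trans /(_ NCI)]; exact: noiU.
set Gt := fun y => if y \in X then F y - ev h y else F (q y) + ev h y.
have [g [gs gU]] := IH U Gt ltU.
have gnoi T : g T != 0 -> i \notin T by move=> /gs [_]; exact: noiU.
exists (fun S : {set 'I_m} => if i \in S then h (S :\ i) else g S); split.
  move=> S; case: ifP => iS nz.
    have [c1 c2] := hs _ nz; split.
      rewrite (cardsD1 i S) iS add1n expnS; apply: leq_trans card2I.
      by rewrite leq_mul2l c1 orbT.
    apply/subsetP => j jS; case: (eqVneq j i) => [->//|ji].
    have : j \in S :\ i by rewrite in_setD1 ji jS.
    move=> /(subsetP c2) /(subsetP NCI) /(subsetP NCU); rewrite in_setD1; case/andP => _ //.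
  have [c1 c2] := gs _ nz; split.
    by apply: leq_trans c1 _; exact: leq_imset_card.
  by apply: subset_trans c2 (subset_trans NCU _); exact: subsetDl.
move=> x xX.
rewrite /ev (bigID (fun S : {set 'I_m} => i \in S)) /=.
have E1 : \sum_(S : {set 'I_m} | i \in S) (if i \in S then h (S :\ i) else g S) * chi S x
   = \sum_(S : {set 'I_m} | i \in S) h (S :\ i) * chi S x by apply: eq_bigr => S ->.
have E2 : \sum_(S : {set 'I_m} | i \notin S) (if i \in S then h (S :\ i) else g S) * chi S x
   = \sum_(S : {set 'I_m} | i \notin S) g S * chi S x by apply: eq_bigr => S /negbTE ->.
rewrite E1 E2.
rewrite sum_noi //.
rewrite (reindex_onto (fun T : {set 'I_m} => i |: T) (fun S : {set 'I_m} => S :\ i)) /=; last first.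
  by move=> S iS; rewrite setD1K.
rewrite (eq_bigl (fun T : {set 'I_m} => i \notin T)); last first.
  move=> T; rewrite setU11 /=; case: (boolP (i \in T)) => iT.
    by apply/negbTE/eqP => E; move: iT; rewrite -E setD11.
  by rewrite setU1K // eqxx.
rewrite (eq_bigr (fun T : {set 'I_m} => pm (x i) * (h T * chi T x))); last first.
  by move=> T iT; rewrite setU1K // chi_U1 // mulrCA.
rewrite -mulr_sumr sum_noi //.
have px : p x \in U by apply: imset_f.
rewrite -(ev_setb h i false x hnoi) -(ev_setb g i false x gnoi).
rewrite -/p gU // /Gt.
case xi : (x i).
  have qpx : q (p x) = x.
    by apply/ffunP => j; rewrite !ffunE; case: eqP => [->|].
  case: ifP => pxX.
    have pxI : p x \in I by rewrite inE px pxX qpx xX.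
    rewrite hI // qpx /pm.
    by have t2 := two_neq0; field.
  by rewrite qpx /pm; ring.
have -> : p x = x.
  by apply/ffunP => j; rewrite !ffunE; case: eqP => [->|].
by rewrite xX /pm; ring.
Qed.

Lemma chi_fl (i : 'I_m) (T : {set 'I_m}) (x : cube m) :
  chi T (fl i x) = (if i \in T then -1 else 1) * chi T x :> R.
Proof.
case: ifP => iT.
  rewrite /chi (bigD1 i) //= [in RHS](bigD1 i) //= ffunE eqxx mulrA.
  congr (_ * _); last first.
    by apply: eq_bigr => j /andP[_ /negbTE ji]; rewrite ffunE ji.
  by rewrite /pm; case: (x i); rewrite ?mulrN1 ?opprK ?mul1r ?mulN1r.
rewrite mul1r; apply: eq_bigr => j jT; rewrite ffunE; case: eqP => // E.
by rewrite -E jT in iT.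
Qed.

Lemma fl_inv (i : 'I_m) : involutive (fl i).
Proof. by move=> x; apply/ffunP => j; rewrite !ffunE; case: eqP => //; rewrite negbK. Qed.

Lemma orth (T S : {set 'I_m}) :
  \sum_(x : cube m) chi T x * chi S x = if T == S then (2 ^+ m : R) else 0.
Proof.
case: eqP => [<-|ne].
  rewrite (eq_bigr (fun _ => 1)); last first.
    move=> x _; rewrite /chi -big_split /= big1 // => j _.
    by rewrite /pm; case: (x j); rewrite ?mulrNN mulr1.
  rewrite sumr_const card_ffun card_bool card_ord.
  by rewrite -natrX.
case: (pickP (fun i => (i \in T) != (i \in S))) => [i Hi|H]; last first.
  by exfalso; apply: ne; apply/setP => j; apply/eqP; move: (H j) => /negbT; rewrite negbK.
set s := \sum_x _.
have : s = - s.
  rewrite /s {1}(reindex_inj (can_inj (fl_inv i))) /= -sumrN.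
  apply: eq_bigr => x _; rewrite !chi_fl.
  by move: Hi; case: (i \in T); case: (i \in S); rewrite //= => _; ring.
move/eqP; rewrite -subr_eq0 opprK -mulr2n -mulr_natr mulf_eq0 pnatr_eq0 orbF.
by move/eqP.
Qed.

Lemma fourier_ev (c : {set 'I_m} -> R) (S : {set 'I_m}) : fourier (ev c) S = c S.
Proof.
rewrite /fourier /ev.
rewrite (eq_bigr (fun x => \sum_T c T * (chi T x * chi S x))); last first.
  by move=> x _; rewrite mulr_suml; apply: eq_bigr => T _; rewrite mulrA.
rewrite exchange_big /=.
rewrite (eq_bigr (fun T => c T * (if T == S then 2 ^+ m else 0))); last first.
  by move=> T _; rewrite -mulr_sumr orth.
rewrite (bigD1 S) //= eqxx big1 ?addr0; last first.
  by move=> T /negbTE ->; rewrite mulr0.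
by rewrite mulrCA mulVf ?mulr1 // expf_neq0 // pnatr_eq0.
Qed.

End Aux.

Theorem mainTheorem7 (R : realFieldType) (m d : nat)
    (hd : (1 <= d)%N) (hdm : (d <= m)%N)
    (psi : cube d -> cube m) (psi_inj : injective psi)
    (h : cube m -> R) (h_pm : forall x, h x = 1 \/ h x = -1) :
  exists f : cube m -> R,
    (forall z : cube d, f (psi z) = h (psi z)) /\ (fdeg f <= d)%N.
Proof.
set X := psi @: [set: cube d].
have [c [cs cX]] := @key R m _ X h (leqnn _).
exists (@ev R m c); split.
  by move=> z; apply: cX; apply: imset_f.
rewrite /fdeg; apply/bigmax_leqP => S; rewrite fourier_ev => nz.
have [c1 _] := cs _ nz.
have cX2 : #|X| = (2 ^ d)%N.
  by rewrite /X (card_imset _ psi_inj) cardsT /cube card_ffun card_bool card_ord.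
by move: c1; rewrite cX2 (leq_exp2l _ _ (isT : (1 < 2)%N)).
Qed.
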